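(* Let $f(z)=\sum_{j\ge0}\binom{2j}{j}\left(\sum_{k=0}^{j}\binom{j}{k}^2\binom{j+k}{k}\binom{2k}{j}\right)z^j\in1+z\mathbb{Z}[[z]]$. Then for every prime $p$ one has $\Lambda_p(f_{|p})=f_{|p}$, and there is a finite set $\mathcal{J}$ of primes such that $f\in\mathcal{L}(\mathcal{P}\setminus\mathcal{J})$, where $\mathcal{P}$ is the set of all primes.
   Context: For a prime $p$, $\mathbb{Z}_{(p)}$ is the localization of $\mathbb{Z}$ at $(p)$; for $f=\sum a(n)z^n\in\mathbb{Z}_{(p)}[[z]]$, $f_{|p}(z)=\sum (a(n)\bmod p)z^n$; $\Lambda_p(\sum a(n)z^n)=\sum a(np)z^n$. The height of a rational function $P/Q$ with $P,Q$ coprime polynomials is $\max(\deg P,\deg Q)$. For an infinite set $\mathcal{S}$ of primes, $\mathcal{L}(\mathcal{S})$ is the set of $f\in 1+z\mathbb{Q}[[z]]$ such that there is a constant $C>0$ independent of $p$ with: for every $p\in\mathcal{S}$, $f\in\mathbb{Z}_{(p)}[[z]]$, and there exist an integer $l_p>0$ and $A_p\in\mathbb{F}_p(z)\cap\mathbb{F}_p[[z]]$ with $f_{|p}(z)=A_p(z)f_{|p}(z^{p^{l_p}})$ and height of $A_p$ at most $Cp^{l_p}$. *)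

(* Defs.v *)
From HB Require Import structures.
From mathcomp Require Import all_boot all_order all_algebra.
Set Implicit Arguments. Unset Strict Implicit. Unset Printing Implicit Defensive.
Import Order.TTheory GRing.Theory Num.Theory.
Local Open Scope ring_scope.

(* Formal power series are represented by their coefficient sequences nat -> R. *)

Definition in_Zloc (p : nat) (q : rat) : bool := ~~ (p%:Z %| denq q)%Z.

Definition red_rat (p : nat) (q : rat) : 'F_p := (numq q)%:~R / (denq q)%:~R.

Definition red_ser (p : nat) (f : nat -> rat) : nat -> 'F_p := fun n => red_rat p (f n).

Definition Lambda {R : Type} (p : nat) (g : nat -> R) : nat -> R := fun n => g (n * p)%N.

Definition polyser_mul {R : nzRingType} (P : {poly R}) (g : nat -> R) : nat -> R :=
  fun n => \sum_(i < n.+1) P`_i * g (n - i)%N.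

Definition ser_subst_pow {R : nzRingType} (g : nat -> R) (m : nat) : nat -> R :=
  fun n => if (m %| n)%N then g (n %/ m)%N else 0.

Definition height {R : nzRingType} (P Q : {poly R}) : nat := maxn (size P).-1 (size Q).-1.

Definition in_L (S : nat -> Prop) (f : nat -> rat) : Prop :=
  f 0%N = 1 /\
  exists C : rat, 0 < C /\
    forall p : nat, prime p -> S p ->
      (forall n, in_Zloc p (f n)) /\
      exists l : nat, (0 < l)%N /\
        exists P Q : {poly 'F_p},
          (* A_p = P/Q, reduced, and in F_p[[z]] *)
          coprimep P Q /\ Q`_0 != 0 /\
          (* f_{|p}(z) = A_p(z) f_{|p}(z^{p^l}), i.e. Q f_{|p}(z) = P f_{|p}(z^{p^l}) *)
          (forall n, polyser_mul Q (red_ser p f) n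
                     = polyser_mul P (ser_subst_pow (red_ser p f) (p ^ l)%N) n) /\
          (height P Q)%:R <= C * (p ^ l)%:R.

Definition a20 (j : nat) : nat :=
  ('C(j.*2, j) * \sum_(0 <= k < j.+1) ('C(j, k) ^ 2 * 'C(j + k, k) * 'C(k.*2, j)))%N.

Definition f20 : nat -> rat := fun j => (a20 j)%:R.

(* Main.v *)
Require Import Defs.
From HB Require Import structures.
From mathcomp Require Import all_boot all_order all_algebra.
From mathcomp Require Import zify ring.
Import Order.TTheory GRing.Theory Num.Theory.
Local Open Scope ring_scope.

Lemma red_nat p (n : nat) : red_rat p (n%:R) = n%:R.
Proof.
rewrite /red_rat.
have -> : (n%:R : rat) = (n%:Z)%:Q by rewrite pmulrn.
by rewrite numq_int denq_int divr1 pmulrn.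
Qed.

Lemma in_Zloc_nat p (n : nat) : prime p -> in_Zloc p (n%:R).
Proof.
move=> pp; rewrite /in_Zloc.
have -> : (n%:R : rat) = (n%:Z)%:Q by rewrite pmulrn.
rewrite denq_int.
by rewrite dvdzE /= dvdn1; case: p pp => [|[|]].
Qed.

Lemma bin_step p a b : prime p ->
  ('C(p + a, b))%:R = ('C(a, b))%:R + (if (p <= b)%N then 'C(a, b - p) else 0%N)%:R :> 'F_p.
Proof.
move=> pp; have p0 := prime_gt0 pp; elim: a b => [|a IH] b.
  rewrite addn0 bin0n.
  case: b => [|b]; first by rewrite bin0 /= leqNgt p0 addr0.
  have [lt|ge] := ltnP b.+1 p.
    by rewrite -Fp_nat_mod // (eqP (prime_dvd_bin _ _)) //= addr0.
  rewrite bin0n.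
  have [->|ne] := eqVneq b.+1 p; first by rewrite binn subnn (gtn_eqF p0) /= add0r.
  rewrite bin_small; last by lia.
  rewrite subn_eq0; have -> : (b.+1 <= p)%N = false by lia.
  by rewrite /= addr0.
case: b => [|b].
  by rewrite !bin0 /= leqNgt p0 addr0.
rewrite addnS binS natrD IH IH binS natrD.
have [le|lt] := leqP p b.
  have -> : (p <= b.+1)%N = true by lia.
  rewrite subSn // (binS a (b - p)) natrD; ring.
have [e|ne] := eqVneq b.+1 p.
  rewrite -e leqnn subnn !bin0 addr0; ring.
have -> : (p <= b.+1)%N = false by lia.
by rewrite !addr0.
Qed.

Lemma lucas0 p n m r s : prime p -> (r < p)%N -> (s < p)%N ->
  ('C(n * p + r, m * p + s))%:R = ('C(n, m) * 'C(r, s))%:R :> 'F_p.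
Proof.
move=> pp rp sp; elim: n m => [|n IH] m.
  rewrite mul0n add0n bin0n.
  case: m => [|m]; first by rewrite mul0n add0n mul1n.
  by rewrite bin_small /= ?mul0n //; lia.
rewrite mulSn -addnA bin_step // IH.
case: m => [|m].
  rewrite mul0n add0n ifF; last by lia.
  by rewrite !bin0 addr0.
have -> : (p <= m.+1 * p + s)%N = true by lia.
have -> : (m.+1 * p + s - p = m * p + s)%N by rewrite mulSn; lia.
by rewrite IH -natrD -mulnDl binS.
Qed.

Lemma lucas p N K : prime p ->
  ('C(N, K))%:R = ('C(N %/ p, K %/ p) * 'C(N %% p, K %% p))%:R :> 'F_p.
Proof.
move=> pp; have p0 := prime_gt0 pp.
by rewrite {1}(divn_eq N p) {1}(divn_eq K p) lucas0 // ltn_pmod.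
Qed.

Definition T20 (j k : nat) : nat := ('C(j, k) ^ 2 * 'C(j + k, k) * 'C(k.*2, j))%N.

Lemma T_lucas p n m r s : prime p -> (r.*2 < p)%N -> (s < p)%N ->
  (T20 (n * p + r) (m * p + s))%:R = (T20 n m * T20 r s)%:R :> 'F_p.
Proof.
move=> pp r2 sp; have rp : (r < p)%N by lia.
rewrite /T20 !natrM lucas0 // natrM.
have [le|lt] := leqP s r.
  have -> : (n * p + r + (m * p + s) = (n + m) * p + (r + s))%N by rewrite mulnDl; lia.
  have -> : ((m * p + s).*2 = (m.*2) * p + s.*2)%N by rewrite -!muln2; lia.
  rewrite !lucas0 //; try lia.
  rewrite !natrM; ring.
rewrite (bin_small lt) mulr0n; ring.
Qed.

Lemma sum_ext (F : nat -> nat) j K : (forall k, (j < k)%N -> F k = 0%N) -> (j < K)%N ->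
  (\sum_(0 <= k < j.+1) F k = \sum_(0 <= k < K) F k)%N.
Proof.
move=> F0 jK; rewrite [RHS](big_cat_nat _ (n := j.+1)) //= [X in (_ + X)%N]big1_seq ?addn0 //.
move=> k /andP [_]; rewrite mem_index_iota => /andP [h _]; exact: F0.
Qed.

Lemma sum_double (F : nat -> nat) N p :
  (\sum_(0 <= k < N * p) F k = \sum_(0 <= m < N) \sum_(0 <= s < p) F (m * p + s))%N.
Proof.
elim: N => [|N IH]; first by rewrite mul0n !big_geq.
rewrite big_nat_recr //= -IH mulSn addnC (big_cat_nat _ (n := N * p)) //=; last by lia.
congr (_ + _)%N.
rewrite -{1}(add0n (N * p)%N) big_addn addKn.
by apply: eq_bigr => s _; rewrite addnC.
Qed.

Definition S20 (j : nat) : nat := (\sum_(0 <= k < j.+1) T20 j k)%N.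

Lemma T20_0 j k : (j < k)%N -> T20 j k = 0%N.
Proof. by move=> h; rewrite /T20 bin_small. Qed.

Lemma S_lucas p n r : prime p -> (r.*2 < p)%N ->
  (S20 (n * p + r))%:R = (S20 n)%:R * (S20 r)%:R :> 'F_p.
Proof.
move=> pp r2; have rp : (r < p)%N by lia.
rewrite /S20 (sum_ext _ _ (n.+1 * p)%N); last 2 first.
- exact: T20_0.
- rewrite mulSn; lia.
rewrite (sum_ext _ r p) //; last exact: T20_0.
rewrite sum_double !natr_sum mulr_suml.
apply: eq_big_nat => m _.
rewrite natr_sum mulr_sumr.
apply: eq_big_nat => s /andP [_ sp].
by rewrite T_lucas // natrM.
Qed.

Lemma Cr_zero p r : prime p -> (r < p)%N -> (p <= r.*2)%N ->
  ('C(r.*2, r))%:R = 0 :> 'F_p.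
Proof.
move=> pp rp r2.
have -> : 'C(r.*2, r) = 'C(1 * p + (r.*2 - p), 0 * p + r) by congr binomial; lia.
rewrite lucas0 //; last by lia.
by rewrite (bin_small (n := (r.*2 - p)%N)) ?muln0 //; lia.
Qed.

Lemma C2_lucas p n r : prime p -> (r < p)%N ->
  ('C((n * p + r).*2, n * p + r))%:R = ('C(n.*2, n))%:R * ('C(r.*2, r))%:R :> 'F_p.
Proof.
move=> pp rp.
have [r2|r2] := ltnP r.*2 p.
  have -> : ((n * p + r).*2 = n.*2 * p + r.*2)%N by rewrite -!muln2; lia.
  by rewrite lucas0 // natrM.
rewrite (Cr_zero p r) // mulr0.
have -> : 'C((n * p + r).*2, n * p + r) = 'C(n.*2.+1 * p + (r.*2 - p), n * p + r).
  by congr binomial; rewrite -!muln2 mulSn; lia.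
rewrite lucas0 //; last by lia.
by rewrite (bin_small (n := (r.*2 - p)%N)) ?muln0 //; lia.
Qed.

Lemma a20_lucas p n r : prime p -> (r < p)%N ->
  (a20 (n * p + r))%:R = (a20 n)%:R * (a20 r)%:R :> 'F_p.
Proof.
move=> pp rp; rewrite /a20 !natrM C2_lucas //.
have [r2|r2] := ltnP r.*2 p.
  rewrite -/(S20 (n * p + r)) -/(S20 n) -/(S20 r) S_lucas //; ring.
rewrite (Cr_zero p r) //; ring.
Qed.

Lemma red20 p i : red_ser p f20 i = (a20 i)%:R.
Proof. by rewrite /red_ser /f20 red_nat. Qed.

Lemma a20_0 : a20 0 = 1%N.
Proof. by rewrite /a20 big_nat1. Qed.

Theorem mainTheorem20 :
  (forall p : nat, prime p ->
     forall n : nat, Lambda p (red_ser p f20) n = red_ser p f20 n) /\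
  exists J : seq nat,
    in_L (fun p => prime p /\ p \notin J) f20.
Proof.
split.
  move=> p pp n; have p0 := prime_gt0 pp.
  rewrite /Lambda !red20 -(addn0 (n * p)%N) a20_lucas // a20_0 mulr1.
  by [].
exists (@nil nat); split; first by rewrite /f20 a20_0.
exists 1; split; first by [].
move=> p pp _; have p0 := prime_gt0 pp.
split; first by move=> n; apply: in_Zloc_nat.
exists 1%N; split; first by [].
exists (\poly_(i < p) (a20 i)%:R), 1; split; first exact: coprimep1.
split; first by rewrite coef1 oner_neq0.
split.
  move=> n; rewrite /polyser_mul expn1.
  rewrite big_ord_recl coef1 /= mul1r big1 ?addr0; last first.
    by move=> i _; rewrite coef1 /= mul0r.
  rewrite subn0 red20.
  have H : (n %% p < n.+1)%N by rewrite ltnS leq_mod.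
  rewrite (bigD1 (Ordinal H)) //= big1 ?addr0.
    rewrite coef_poly ltn_pmod // /ser_subst_pow.
    have e : (n - n %% p = n %/ p * p)%N by rewrite {1}(divn_eq n p) addnK.
    rewrite e dvdn_mull // mulnK // red20.
    by rewrite {1}(divn_eq n p) a20_lucas ?ltn_pmod // mulrC.
  move=> i ne; rewrite coef_poly /ser_subst_pow.
  case: ltnP => ip; last by rewrite mul0r.
  case: ifP => [/dvdnP [k hk]|_]; last by rewrite mulr0.
  exfalso; move/eqP: ne; apply; apply: val_inj => /=.
  have iN : (i <= n)%N by rewrite -ltnS.
  have Nk : n = (k * p + i)%N by rewrite -hk subnK.
  have E := f_equal (fun x => x %% p)%N Nk.
  rewrite /= modnMDl (modn_small ip) in E.
  exact: (esym E).
rewrite /height polyseq1 /= maxn0 mul1r expn1 ler_nat.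
by apply: leq_trans (leq_pred _) (size_poly _ _).
Qed.
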